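(* Let $G$ be a finite simple graph on $[d]$, $k\ge1$, $<$ a monomial order on $R[G]$, and let $\{m_1,\dots,m_s\}$ be the set of all standard monomials of degree $k$ with respect to ${\rm in}_<(K_G)$. Then each $m_i$ equals ${\bf x}_{f_i}$ for a $k$-coloring $f_i$ of an induced subgraph of $G$; namely $m_i=x_{S_1}\cdots x_{S_k}$ with $S_1,\dots,S_k$ pairwise disjoint stable sets and $f_i$ is the coloring of $G[S_1\cup\dots\cup S_k]$ with $f_i(v)=\ell$ for $v\in S_\ell$. Moreover, for every induced subgraph $G'$ of $G$, the set $\{f_1,\dots,f_s\}\cap\mathcal{C}_k(G')$ is a complete representative system for ${\rm kc}(G',k)$.
   Context: A $k$-coloring of a graph $H$ is a map $f:V(H)\to[k]$ (not necessarily surjective) with $f(u)\neq f(v)$ for every edge; $\mathcal{C}_k(H)$ is the set of $k$-colorings of $H$. A Kempe switching: for colors $i<j$ and a connected component $C$ of $H[f^{-1}(i)\cup f^{-1}(j)]$, interchange $i$ and $j$ on $C$. Kempe equivalence $\sim_k$ is the equivalence relation generated by Kempe switchings, and ${\rm kc}(H,k)=\mathcal{C}_k(H)/\!\sim_k$. Colorings differing only by a permutation of colors are identified. A stable set of $G$ is a subset of $[d]$ with no edge of $G$ (including $\emptyset$ and singletons); $S(G)$ is the set of stable sets; $R[G]=\mathbb{K}[x_S : S\in S(G)]$ over a field $\mathbb{K}$, all variables of degree $1$. For a $k$-coloring $f$ of an induced subgraph, ${\bf x}_f=\prod_{\ell=1}^k x_{f^{-1}(\ell)}$. $J_G$ is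 the ideal generated by all ${\bf x}_f-{\bf x}_g$ with $f,g$ $2$-colorings of a common induced subgraph of $G$; $M_G=\langle x_Sx_T : S,T\in S(G),\ S\cap T\neq\emptyset\rangle$; $K_G=J_G+M_G$. A monomial is standard w.r.t. ${\rm in}_<(K_G)$ (the ideal generated by leading monomials of nonzero elements of $K_G$) if it does not lie in it. *)

(* Defs.v *)
From HB Require Import structures.
From mathcomp Require Import all_boot all_order all_algebra.
From mathcomp Require Import mpoly.
From Stdlib Require Import Relation_Operators.
Set Implicit Arguments. Unset Strict Implicit. Unset Printing Implicit Defensive.
Import GRing.Theory.
Local Open Scope ring_scope.

Definition simple_graph (d : nat) (G : rel 'I_d) : Prop :=
  ssrbool.symmetric G /\ irreflexive G.

Definition stableb (d : nat) (G : rel 'I_d) (S : {set 'I_d}) : bool :=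
  [forall u in S, forall v in S, ~~ G u v].

Definition stab (d : nat) (G : rel 'I_d) := {S : {set 'I_d} | stableb G S}.

(* Number of variables of R[G] : one variable x_S per stable set S. *)
Definition nv (d : nat) (G : rel 'I_d) : nat := #|{: stab G}|.

Definition xS (K : fieldType) (d : nat) (G : rel 'I_d) (S : stab G)
  : {mpoly K[nv G]} := 'X_(enum_rank S).

(* x_S for an arbitrary subset S (only ever used for stable S; 0 otherwise). *)
Definition xset (K : fieldType) (d : nat) (G : rel 'I_d) (S : {set 'I_d})
  : {mpoly K[nv G]} :=
  match @insub _ (stableb G) (stab G) S with
  | Some s => xS K s
  | None => 0
  end.

(* f : 'I_d -> 'I_k is a k-coloring of the induced subgraph G[W]
   (only the values on W matter). Colors [k] are 'I_k. *)
Definition coloring (d k : nat) (G : rel 'I_d) (W : {set 'I_d})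
  (f : 'I_d -> 'I_k) : Prop :=
  forall u v, u \in W -> v \in W -> G u v -> f u != f v.

Definition xf (K : fieldType) (d k : nat) (G : rel 'I_d) (W : {set 'I_d})
  (f : 'I_d -> 'I_k) : {mpoly K[nv G]} :=
  \prod_(l < k) xset K G [set v in W | f v == l].

Definition in_ideal (n : nat) (K : fieldType) (P : {mpoly K[n]} -> Prop)
  (p : {mpoly K[n]}) : Prop :=
  exists s : seq ({mpoly K[n]} * {mpoly K[n]}),
    (forall q, q \in s -> P q.2) /\ p = \sum_(q <- s) q.1 * q.2.

Definition J_gen (K : fieldType) (d : nat) (G : rel 'I_d) (p : {mpoly K[nv G]})
  : Prop :=
  exists (W : {set 'I_d}) (f g : 'I_d -> 'I_2),
    coloring G W f /\ coloring G W g /\ p = xf K G W f - xf K G W g.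

Definition M_gen (K : fieldType) (d : nat) (G : rel 'I_d) (p : {mpoly K[nv G]})
  : Prop :=
  exists S T : stab G, (val S :&: val T != set0) /\ p = xS K S * xS K T.

Definition in_KG (K : fieldType) (d : nat) (G : rel 'I_d) (p : {mpoly K[nv G]})
  : Prop :=
  in_ideal (fun q => @J_gen K d G q \/ @M_gen K d G q) p.

Definition monomial_order (n : nat) (le : rel 'X_{1..n}) : Prop :=
  [/\ reflexive le, antisymmetric le, transitive le & total le] /\
  (forall m1 m2 m3, le m1 m2 -> le (mnm_add m1 m3) (mnm_add m2 m3)) /\
  (forall m, le (@mnm0 n) m).

Definition is_lead (n : nat) (K : fieldType) (le : rel 'X_{1..n})
  (p : {mpoly K[n]}) (m : 'X_{1..n}) : Prop :=
  m \in msupp p /\ (forall m', m' \in msupp p -> le m' m).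

Definition in_initial (n : nat) (K : fieldType) (le : rel 'X_{1..n})
  (I : {mpoly K[n]} -> Prop) (p : {mpoly K[n]}) : Prop :=
  in_ideal (fun q => exists f m, I f /\ f != 0 /\ is_lead le f m /\ q = 'X_[m]) p.

Definition standard_deg (K : fieldType) (d : nat) (G : rel 'I_d)
  (le : rel 'X_{1..nv G}) (k : nat) (m : 'X_{1..nv G}) : Prop :=
  mdeg m = k /\ ~ in_initial le (@in_KG K d G) 'X_[m].

Definition swap_col (k : nat) (i j c : 'I_k) : 'I_k :=
  if c == i then j else if c == j then i else c.

Definition kempe_switch (d k : nat) (G : rel 'I_d) (W : {set 'I_d})
  (f g : 'I_d -> 'I_k) : Prop :=
  exists (i j : 'I_k) (v : 'I_d),
    let H := [set u in W | (f u == i) || (f u == j)] in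
    let eH := [rel a b | [&& a \in H, b \in H & G a b]] in
    let C := [set u | connect eH v u] in
    [/\ (i < j)%N, v \in H,
        {in C, forall u, g u = swap_col i j (f u)} &
        {in W :\: C, forall u, g u = f u}].

(* one step: a Kempe switching, or equality as colorings of G[W] *)
Definition kempe_step (d k : nat) (G : rel 'I_d) (W : {set 'I_d})
  (f g : 'I_d -> 'I_k) : Prop :=
  coloring G W f /\ coloring G W g /\ (kempe_switch G W f g \/ {in W, f =1 g}).

Definition kempe_eq (d k : nat) (G : rel 'I_d) (W : {set 'I_d})
  (f g : 'I_d -> 'I_k) : Prop :=
  Relation_Operators.clos_refl_sym_trans _ (kempe_step G W) f g.

(* Main.v *)
Require Import Defs.
From HB Require Import structures.
From mathcomp Require Import all_boot all_order all_algebra.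
From mathcomp Require Import mpoly.
From Stdlib Require Import Relation_Operators ClassicalEpsilon.
Set Implicit Arguments. Unset Strict Implicit. Unset Printing Implicit Defensive.
Import GRing.Theory.
Local Open Scope ring_scope.

Section Basics.
Variables (K : fieldType) (d : nat) (G : rel 'I_d).
Hypothesis symG : ssrbool.symmetric G.

Local Notation n := (nv G).

Lemma stable0 : stableb G set0.
Proof. by apply/forallP => u; rewrite in_set0. Qed.

Definition s0 : stab G := exist _ set0 stable0.

Definition cidx (S : {set 'I_d}) : 'I_n := enum_rank (insubd s0 S).

Lemma xset_cidx S : stableb G S -> xset K G S = 'X_(cidx S).
Proof.
move=> hS; rewrite /xset /cidx /insubd; case: insubP => [s _ _|] //=.
by rewrite hS.
Qed.

Lemma cidx_inj S T : stableb G S -> stableb G T -> cidx S = cidx T -> S = T.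
Proof.
move=> hS hT /enum_rank_inj /(congr1 val).
by rewrite !insubdK.
Qed.

Lemma cidx_val (s : stab G) : cidx (val s) = enum_rank s.
Proof. by rewrite /cidx valKd. Qed.

Definition cls k (W : {set 'I_d}) (f : 'I_d -> 'I_k) (l : 'I_k) := [set v in W | f v == l].

Definition mon k (W : {set 'I_d}) (f : 'I_d -> 'I_k) : 'X_{1..n} :=
  (\big[+%MM/0%MM]_(l < k) U_(cidx (cls W f l)))%MM.

Lemma cls_stable k W (f : 'I_d -> 'I_k) l : coloring G W f -> stableb G (cls W f l).
Proof.
move=> hf; apply/forallP => u; apply/implyP; rewrite inE => /andP[uW /eqP fu].
apply/forallP => v; apply/implyP; rewrite inE => /andP[vW /eqP fv].
by apply/negP => /(hf u v uW vW); rewrite fu fv eqxx.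
Qed.

Lemma xf_mon k W (f : 'I_d -> 'I_k) : coloring G W f -> xf K G W f = 'X_[mon W f].
Proof.
move=> hf; rewrite /xf /mon (big_morph _ (@mpolyXD _ _) (@mpolyX0 _ _)).
by apply: eq_bigr => l _; rewrite xset_cidx //; apply: cls_stable.
Qed.

Lemma mon_deg k W (f : 'I_d -> 'I_k) : mdeg (mon W f) = k.
Proof.
by rewrite /mon mdeg_sum; under eq_bigr do rewrite mdeg1; rewrite sum1_card card_ord.
Qed.

End Basics.

Section Ideal.
Variables (n : nat) (K : fieldType) (P : {mpoly K[n]} -> Prop).

Lemma ideal0 : in_ideal P 0.
Proof. by exists [::]; rewrite big_nil. Qed.

Lemma ideal_gen p : P p -> in_ideal P p.
Proof.
by move=> hp; exists [:: (1, p)]; split => [q|]; rewrite ?inE ?big_seq1 ?mul1r // => /eqP->.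
Qed.

Lemma idealD p q : in_ideal P p -> in_ideal P q -> in_ideal P (p + q).
Proof.
move=> [s [hs ->]] [t [ht ->]]; exists (s ++ t); split; last by rewrite big_cat.
by move=> x; rewrite mem_cat => /orP[/hs|/ht].
Qed.

Lemma idealM c p : in_ideal P p -> in_ideal P (c * p).
Proof.
move=> [s [hs ->]]; exists [seq (c * x.1, x.2) | x <- s]; split.
  by move=> x /mapP[y /hs hy ->].
by rewrite big_map big_distrr; apply: eq_bigr => x _ /=; rewrite mulrA.
Qed.

Lemma idealN p : in_ideal P p -> in_ideal P (- p).
Proof. by move=> /(idealM (-1)); rewrite mulN1r. Qed.

Lemma idealB p q : in_ideal P p -> in_ideal P q -> in_ideal P (p - q).
Proof. by move=> hp /idealN; apply: idealD. Qed.

End Ideal.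

Section Extract.
Variables (K : fieldType) (d : nat) (G : rel 'I_d).

Lemma mon_split k W (f : 'I_d -> 'I_k) i j : i != j ->
  mon G W f = (\big[+%MM/0%MM]_(l | (l != i) && (l != j)) U_(cidx G (cls W f l))
     + U_(cidx G (cls W f i)) + U_(cidx G (cls W f j)))%MM.
Proof.
move=> ij; rewrite /mon (bigD1 i) //= (bigD1 j) //=.
  by rewrite addmA addmC addmA.
by rewrite eq_sym.
Qed.

Lemma extract k W (f : 'I_d -> 'I_k) a A B :
  coloring G W f -> stableb G A -> stableb G B ->
  mon G W f = (a + U_(cidx G A) + U_(cidx G B))%MM ->
  exists i j, [/\ i != j, cls W f i = A, cls W f j = B &
    a = (\big[+%MM/0%MM]_(l | (l != i) && (l != j)) U_(cidx G (cls W f l)))%MM].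
Proof.
move=> hf hA hB E.
have pos (P : pred 'I_k) c :
    (0 < (\big[+%MM/0%MM]_(l | P l) U_(cidx G (cls W f l)))%MM c)%N ->
    exists2 l, P l & cidx G (cls W f l) = c.
  rewrite mnm_sumE; case: (pickP (fun l => P l && (cidx G (cls W f l) == c))).
    by move=> l /andP[Pl /eqP<-] _; exists l.
  move=> H0; rewrite big1 // => l Pl; rewrite mnm1E; have := H0 l.
  by rewrite Pl /= => ->.
have : (0 < mon G W f (cidx G A))%N.
  by rewrite E !mnmDE mnm1E eqxx addn1 ltn_addr.
case/(pos xpredT) => i _ hi.
have ciA : cls W f i = A by apply: (@cidx_inj _ G) => //; apply: cls_stable.
move: E; rewrite /mon (bigD1 i) //= hi => E.
have E2 : (\big[+%MM/0%MM]_(l | l != i) U_(cidx G (cls W f l)) = a + U_(cidx G B))%MM.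
  apply: (@addIm _ (U_(cidx G A))%MM); rewrite addmC E.
  by rewrite -!addmA [(U_(cidx G B) + _)%MM]addmC.
have : (0 < (\big[+%MM/0%MM]_(l | l != i) U_(cidx G (cls W f l)))%MM (cidx G B))%N.
  by rewrite E2 !mnmDE mnm1E eqxx addn1.
case/pos => j ji hj.
have cjB : cls W f j = B by apply: (@cidx_inj _ G) => //; apply: cls_stable.
exists i, j; split => //; first by rewrite eq_sym.
move: E2; rewrite (bigD1 j) //= hj => E2.
by apply: (@addIm _ (U_(cidx G B))%MM); rewrite -E2 addmC.
Qed.

End Extract.

Definition inij k (i j x : 'I_k) := (x == i) || (x == j).

Lemma inijC k (i j x : 'I_k) : inij i j x = inij j i x.
Proof. by rewrite /inij orbC. Qed.

Lemma swapK k (i j x : 'I_k) : swap_col i j (swap_col i j x) = x.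
Proof.
rewrite /swap_col; case: (eqVneq x i) => [->|xi].
  by case: (eqVneq j i) => [->|ji]; rewrite ?eqxx.
case: (eqVneq x j) => [->|xj]; first by rewrite eqxx.
by rewrite (negbTE xi) (negbTE xj).
Qed.

Lemma swap_inj k (i j : 'I_k) : injective (swap_col i j).
Proof. exact: (can_inj (@swapK k i j)). Qed.

Lemma swap_in k (i j x : 'I_k) : inij i j x -> inij i j (swap_col i j x).
Proof.
move=> h; rewrite /swap_col; case: ifP => _; first by rewrite /inij eqxx orbT.
by case: ifP => _; first by rewrite /inij eqxx.
Qed.

Lemma swap_other k (i j x y : 'I_k) : i != j -> inij i j x -> inij i j y -> x != y ->
  y = swap_col i j x.
Proof.
rewrite /inij /swap_col => ij.
case/orP => /eqP -> /orP[] /eqP -> //; rewrite ?eqxx //.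
  by rewrite eq_sym (negbTE ij).
Qed.

Lemma connect_inv (T : finType) (e : rel T) (P : T -> Prop) x y :
  (forall a b, e a b -> P a -> P b) -> connect e x y -> P x -> P y.
Proof.
move=> hP /connectP [p]; elim: p x => [|z p IH] x /=; first by move=> _ ->.
case/andP => exz pz ly Px; apply: (IH z pz ly); exact: hP exz Px.
Qed.

Section Kempe.
Variables (d k : nat) (G : rel 'I_d).
Hypothesis symG : ssrbool.symmetric G.

Lemma kempe_2col_lt W (i j : 'I_k) (f f' : 'I_d -> 'I_k) : (i < j)%N ->
  coloring G W f' ->
  coloring G W f ->
  (forall v, v \in W -> inij i j (f v) = inij i j (f' v)) ->
  (forall v, v \in W -> ~~ inij i j (f v) -> f' v = f v) ->
  kempe_eq G W f f'.
Proof.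
move=> ltij hf'; have nij : i != j by rewrite neq_ltn ltij.
suff: forall N f, (#|[set v in W | f v != f' v]| <= N)%N -> coloring G W f ->
  (forall v, v \in W -> inij i j (f v) = inij i j (f' v)) ->
  (forall v, v \in W -> ~~ inij i j (f v) -> f' v = f v) -> kempe_eq G W f f'.
  by move=> /(_ _ f (leqnn _)).
have eqcase f0 : coloring G W f0 -> [set v in W | f0 v != f' v] = set0 ->
    kempe_eq G W f0 f'.
  move=> hf D0; apply: rst_step; split => //; split => //; right => u uW.
  apply/eqP/negPn/negP => ne.
  have : u \in [set v in W | f0 v != f' v] by rewrite inE uW ne.
  by rewrite D0 inE.
elim => [|N IH] f0 hN hf h1 h2;
  (case: (set_0Vmem [set v in W | f0 v != f' v]) => [D0|[v hv]]);
  try (by apply: eqcase).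
  by move: hN; rewrite leqn0 => /eqP/cards0_eq D0; rewrite D0 inE in hv.
move: (hv); rewrite inE => /andP[vW fvne].
have fv : inij i j (f0 v).
  by apply/negPn/negP => /(h2 v vW) e; rewrite e eqxx in fvne.
pose H := [set u in W | (f0 u == i) || (f0 u == j)].
pose eH := [rel a b | [&& a \in H, b \in H & G a b]].
pose C := [set u | connect eH v u].
pose f1 u := if u \in C then swap_col i j (f0 u) else f0 u.
have vH : v \in H by rewrite inE vW.
have CH u : u \in C -> u \in H.
  rewrite inE => cu; apply: (connect_inv (P := fun x => x \in H)) cu vH.
  by move=> a b /= /and3P[].
have Cf' u : u \in C -> f' u = swap_col i j (f0 u).
  rewrite inE => cu.
  have := (connect_inv (P := fun x => x \in H /\ f' x = swap_col i j (f0 x))) _ _ _ cu.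
  case => //.
    move=> a b /= /and3P[aH bH gab] [_ ea]; split => //.
    move: (aH) (bH); rewrite !inE => /andP[aW _] /andP[bW fb].
    have fa : inij i j (f0 a) by move: aH; rewrite inE => /andP[].
    have eb : f0 b = swap_col i j (f0 a).
      by apply: swap_other => //; apply: hf.
    have f'b : inij i j (f' b) by rewrite -h1.
    have f'a : inij i j (f' a) by rewrite -h1.
    have : f' b = swap_col i j (f' a) by apply: swap_other => //; apply: hf'.
    by rewrite ea swapK eb swapK.
  split => //; apply: swap_other => //; first by rewrite -h1.
have vC : v \in C by rewrite inE connect0.
have f1C u : u \in C -> f1 u = f' u by move=> uC; rewrite /f1 uC Cf'.
have f1N u : u \notin C -> f1 u = f0 u by move=> uC; rewrite /f1 (negbTE uC).
have mixed u w : u \in C -> w \notin C -> w \in W -> G u w -> f1 u != f1 w.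
  move=> uC wC wW guw; rewrite (f1N _ wC) /f1 uC.
  have wH : w \notin H.
    apply/negP => wH; move: wC; rewrite inE => /negP; apply.
    apply: connect_trans (_ : connect eH v u) _; first by move: uC; rewrite inE.
    by apply: connect1; rewrite /= wH CH.
  apply/eqP => e; move: wH; rewrite inE wW /= -e.
  move/negP; apply; change (inij i j (swap_col i j (f0 u))); apply: swap_in.
  by move: (CH _ uC); rewrite inE => /andP[].
have col1 : coloring G W f1.
  move=> u w uW wW guw.
  case: (boolP (u \in C)) => uC; case: (boolP (w \in C)) => wC.
  - by rewrite /f1 uC wC (inj_eq (@swap_inj _ i j)); apply: hf.
  - exact: mixed.
  - by rewrite eq_sym; apply: mixed => //; rewrite symG.
  - by rewrite !f1N //; apply: hf.
apply: (@rst_trans _ _ _ f1).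
  apply: rst_step; split => //; split => //; left.
  exists i, j, v; cbv zeta; split => //.
    by move=> u uC; rewrite /f1 ifT.
  by move=> u; rewrite inE => /andP[uC _]; rewrite /f1 ifF //; apply/negbTE.
apply: IH => //.
- have sub : [set u in W | f1 u != f' u] \subset [set u in W | f0 u != f' u] :\ v.
    apply/subsetP => u; rewrite !inE => /andP[uW ne].
    case: (boolP (u \in C)) => uC; first by rewrite f1C ?eqxx in ne.
    rewrite f1N // in ne; rewrite uW ne /= !andbT.
    by apply/eqP => e; rewrite e vC in uC.
  apply: leq_trans (subset_leq_card sub) _.
  by move: hN; rewrite (cardsD1 v) hv.
- move=> u uW; case: (boolP (u \in C)) => uC; first by rewrite f1C.
  by rewrite f1N // h1.
- move=> u uW; case: (boolP (u \in C)) => uC; first by rewrite f1C.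
  by rewrite f1N //; apply: h2.
Qed.

Lemma kempe_2col W (i j : 'I_k) (f f' : 'I_d -> 'I_k) : i != j ->
  coloring G W f -> coloring G W f' ->
  (forall v, v \in W -> inij i j (f v) = inij i j (f' v)) ->
  (forall v, v \in W -> ~~ inij i j (f v) -> f' v = f v) ->
  kempe_eq G W f f'.
Proof.
move=> nij hf hf' h1 h2; case: (ltngtP i j) => [lt|gt|eq].
- exact: (kempe_2col_lt lt).
- apply: (kempe_2col_lt gt) => // v vW; rewrite !(inijC j i); [exact: h1|exact: h2].
- by move/val_inj: eq nij => ->; rewrite eqxx.
Qed.

End Kempe.

Notation o0 := (0%R : 'I_2).
Notation o1 := (1%R : 'I_2).

Section JMove.
Variables (d k : nat) (G : rel 'I_d).
Hypothesis symG : ssrbool.symmetric G.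


Lemma F01 (x : 'I_2) : (x == 0) || (x == 1).
Proof. by case: x => [[|[|m]] hm]. Qed.

Lemma mon2 W (F : 'I_d -> 'I_2) :
  mon G W F = (U_(cidx G (cls W F o0)) + U_(cidx G (cls W F o1)))%MM.
Proof.
rewrite (@mon_split d G 2 W F o0 o1) // big_pred0 ?add0m //.
by case => [[|[|m]] hm].
Qed.


Lemma jmove W (f : 'I_d -> 'I_k) a W2 (F F' : 'I_d -> 'I_2) :
  coloring G W f -> coloring G W2 F -> coloring G W2 F' ->
  mon G W f = (a + mon G W2 F)%MM ->
  exists f', [/\ coloring G W f', mon G W f' = (a + mon G W2 F')%MM & kempe_eq G W f f'].
Proof.
move=> hf hF hF'; rewrite mon2 addmA => /extract.
case/(_ hf (cls_stable o0 hF) (cls_stable o1 hF)) => i [j [nij ci cj ea]].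
have W2W v : v \in W2 -> (v \in W) && inij i j (f v).
  move=> vW2; case/orP: (F01 (F v)) => Fv.
    have : v \in cls W2 F o0 by rewrite inE vW2.
    by rewrite -ci inE /inij => /andP[-> ->].
  have : v \in cls W2 F o1 by rewrite inE vW2.
  by rewrite -cj inE /inij => /andP[-> ->]; rewrite orbT.
have inW2 v : v \in W -> (v \in W2) = inij i j (f v).
  move=> vW; apply/idP/idP => [/W2W /andP[]//|/orP[] fv].
    have : v \in cls W f i by rewrite inE vW fv.
    by rewrite ci inE => /andP[].
  have : v \in cls W f j by rewrite inE vW fv.
  by rewrite cj inE => /andP[].
pose f' v := if v \in W2 then (if F' v == o0 then i else j) else f v.
have f'W2 v : v \in W2 -> inij i j (f' v).
  by move=> vW2; rewrite /f' vW2 /inij; case: ifP; rewrite eqxx ?orbT.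
have f'N v : v \notin W2 -> f' v = f v by move=> h; rewrite /f' (negbTE h).
have inf' v : v \in W -> inij i j (f' v) = (v \in W2).
  move=> vW; case: (boolP (v \in W2)) => h; first exact: f'W2.
  by rewrite f'N // -inW2 // (negbTE h).
have col' : coloring G W f'.
  move=> u w uW wW guw.
  case: (boolP (u \in W2)) => uW2; case: (boolP (w \in W2)) => wW2.
  - rewrite /f' uW2 wW2; have := hF' u w uW2 wW2 guw.
    case/orP: (F01 (F' u)) => /eqP ->; case/orP: (F01 (F' w)) => /eqP ->;
      rewrite /= ?eqxx //= => _; by rewrite // eq_sym.
  - by apply/eqP => e; move: (inf' u uW) (inf' w wW); rewrite e uW2 (negbTE wW2) => ->.
  - by apply/eqP => e; move: (inf' u uW) (inf' w wW); rewrite e wW2 (negbTE uW2) => ->.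
  - by rewrite !f'N //; apply: hf.
exists f'; split => //; last first.
  apply: (kempe_2col symG nij) => // v vW; first by rewrite inf' // inW2.
  by rewrite -inW2 // => h; rewrite f'N.
have cl l : l != i -> l != j -> cls W f' l = cls W f l.
  move=> li lj; apply/setP => v; rewrite !inE; case: (boolP (v \in W)) => //= vW.
  case: (boolP (v \in W2)) => vW2; last by rewrite f'N.
  move: (f'W2 v vW2); rewrite inW2 // in vW2.
  move: vW2; rewrite /inij => /orP[] /eqP -> /orP[] /eqP ->;
    by rewrite ![_ == l]eq_sym ?(negbTE li) ?(negbTE lj).
have cli : cls W f' i = cls W2 F' o0.
  apply/setP => v; rewrite !inE.
  case: (boolP (v \in W2)) => vW2 /=.
    have := W2W v vW2 => /andP[-> _]; rewrite /f' vW2.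
    by case: ifP => _; rewrite ?eqxx // eq_sym (negbTE nij).
  case: (boolP (v \in W)) => //= vW; rewrite f'N //.
  by apply/negP => fi; move: vW2; rewrite inW2 // /inij fi.
have clj : cls W f' j = cls W2 F' o1.
  apply/setP => v; rewrite !inE.
  case: (boolP (v \in W2)) => vW2 /=.
    have := W2W v vW2 => /andP[-> _]; rewrite /f' vW2.
    case/orP: (F01 (F' v)) => /eqP ->; rewrite ?eqxx ?(negbTE nij) //.
  case: (boolP (v \in W)) => //= vW; rewrite f'N //.
  by apply/negP => fj; move: vW2; rewrite inW2 // /inij fj orbT.
rewrite (mon_split G W f' nij) mon2 addmA cli clj ea.
by under eq_bigr => l /andP[li lj] do rewrite cl //.
Qed.


End JMove.

Section AgreeJ.
Variables (K : fieldType) (d k : nat) (G : rel 'I_d).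

Lemma agreeJ W (i j : 'I_k) (f f' : 'I_d -> 'I_k) : i != j ->
  coloring G W f -> coloring G W f' ->
  (forall v, v \in W -> inij i j (f v) = inij i j (f' v)) ->
  (forall v, v \in W -> ~~ inij i j (f v) -> f' v = f v) ->
  in_KG (xf K G W f - xf K G W f').
Proof.
move=> nij hf hf' h1 h2.
pose W2 := [set v in W | inij i j (f v)].
have W2g g : coloring G W g -> (forall v, v \in W -> inij i j (f v) = inij i j (g v)) ->
  let Fg := fun v => if g v == i then o0 else o1 in
  [/\ coloring G W2 Fg, cls W2 Fg o0 = cls W g i & cls W2 Fg o1 = cls W g j].
  move=> hg hfg Fg; split.
  - move=> u w; rewrite !inE => /andP[uW fu] /andP[wW fw] guw.
    have := hg u w uW wW guw; rewrite hfg // in fu; rewrite hfg // in fw.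
    rewrite /Fg; move: fu fw; rewrite /inij;
    by case/orP => /eqP -> /orP[] /eqP ->; rewrite ?eqxx //= ?(eq_sym j i) ?(negbTE nij).
  - rewrite /cls; apply/setP => v; rewrite !inE /Fg; case: (boolP (v \in W)) => //= vW.
    rewrite hfg // /inij; case: (eqVneq (g v) i) => //= _.
    by rewrite andbC.
  - rewrite /cls; apply/setP => v; rewrite !inE /Fg; case: (boolP (v \in W)) => //= vW.
    rewrite hfg // /inij; case: (eqVneq (g v) i) => [->|] //=.
      by rewrite eq_sym (negbTE nij).
    by rewrite eqxx andbT.
have [cF c0 c1] := W2g f hf (fun _ _ => erefl).
have [cF' c0' c1'] := W2g f' hf' h1.
have cl l : l != i -> l != j -> cls W f' l = cls W f l.
  move=> li lj; apply/setP => v; rewrite !inE; case: (boolP (v \in W)) => //= vW.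
  case: (boolP (inij i j (f v))) => fv; last by rewrite h2.
  move: (fv); rewrite h1 // => f'v; move: fv f'v; rewrite /inij.
  by case/orP => /eqP -> /orP[] /eqP ->; rewrite ![_ == l]eq_sym ?(negbTE li) ?(negbTE lj).
rewrite !xf_mon // (mon_split G W f nij) (mon_split G W f' nij).
have -> : (\big[+%MM/0%MM]_(l | (l != i) && (l != j)) U_(cidx G (cls W f' l)) =
  \big[+%MM/0%MM]_(l | (l != i) && (l != j)) U_(cidx G (cls W f l)))%MM.
  by apply: eq_bigr => l /andP[li lj]; rewrite cl.
rewrite -!addmA !mpolyXD -mulrBr; apply: idealM; apply: ideal_gen; left.
exists W2, (fun v => if f v == i then o0 else o1), (fun v => if f' v == i then o0 else o1).
split => //; split => //.
by rewrite (xf_mon K cF) (xf_mon K cF') !mon2 c0 c1 c0' c1' !mpolyXD.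
Qed.

Lemma kempe_KG W (f f' : 'I_d -> 'I_k) :
  kempe_eq G W f f' -> in_KG (xf K G W f - xf K G W f').
Proof.
elim => {f f'} [f g [hf [hg [[i [j [v]]]|eqfg]]]|f|f g _ IH|f g h _ IH1 _ IH2].
- cbv zeta; case=> lt vH hC hW.
  have nij : i != j by rewrite neq_ltn lt.
  set H := [set u in W | _] in vH hC hW.
  set C := [set u | _] in hC hW.
  have CH u : u \in C -> u \in H.
    rewrite inE => cu; apply: (connect_inv (P := fun x => x \in H)) cu vH.
    by move=> a b /= /and3P[].
  apply: (agreeJ nij) => // u uW.
    case: (boolP (u \in C)) => uC; last by rewrite hW // inE uC.
    rewrite hC //; have := CH u uC; rewrite inE uW /= => fu.
    by rewrite (swap_in fu); exact: fu.
  move=> nf; rewrite hW // inE uW andbT; apply/negP => /CH.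
  by rewrite inE uW /=; apply/negP.
- have -> : xf K G W g = xf K G W f.
    apply: eq_bigr => l _; congr xset; apply/setP => v; rewrite !inE.
    by case: (boolP (v \in W)) => //= vW; rewrite eqfg.
  by rewrite subrr; apply: ideal0.
- by rewrite subrr; apply: ideal0.
- by rewrite -opprB; apply: idealN.
- by have := idealD IH1 IH2; rewrite addrA subrK.
Qed.

End AgreeJ.

Section Std.
Variables (K : fieldType) (d : nat) (G : rel 'I_d) (k : nat).
Variable (le : rel 'X_{1..nv G}).
Hypothesis hle : monomial_order le.

Local Notation n := (nv G).

Lemma lead_initial (p : {mpoly K[n]}) m : in_KG p -> p != 0 -> is_lead le p m ->
  in_initial le (@in_KG K d G) 'X_[m].
Proof. by move=> hp nz hl; apply: ideal_gen; exists p, m. Qed.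

Lemma diff_initial a b : a != b -> le a b ->
  in_KG ('X_[a] - 'X_[b] : {mpoly K[n]}) -> in_initial le (@in_KG K d G) 'X_[b].
Proof.
move=> nab lab hK.
have [[refl _ _ _] _] := hle.
have bs : b \in msupp ('X_[a] - 'X_[b] : {mpoly K[n]}).
  rewrite mcoeff_msupp mcoeffB !mcoeffX eqxx (negbTE nab) sub0r oppr_eq0.
  exact: oner_neq0.
apply: (lead_initial hK).
  by apply/negP => /eqP e; rewrite e msupp0 in bs.
split => // x; rewrite mcoeff_msupp mcoeffB !mcoeffX.
case: (eqVneq a x) => [<-|_] //; case: (eqVneq b x) => [<-|_] //.
by rewrite subrr eqxx.
Qed.

Lemma standard_unique m m' : standard_deg K le k m -> standard_deg K le k m' ->
  in_KG ('X_[m] - 'X_[m'] : {mpoly K[n]}) -> m = m'.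
Proof.
move=> [_ sm] [_ sm'] hK; apply/eqP/negPn/negP => ne.
have [[_ _ _ tot] _] := hle.
case/orP: (tot m m') => h.
  by apply: sm'; apply: diff_initial h hK.
apply: sm; apply: (diff_initial _ h); first by rewrite eq_sym.
by rewrite -opprB; apply: idealN.
Qed.

End Std.

Section Phi.
Variables (K : fieldType) (d : nat) (G : rel 'I_d).
Local Notation n := (nv G).
Variables (Cp : pred 'X_{1..n}) (Bd : nat).
Hypothesis HB : forall m, Cp m -> (mdeg m < Bd)%N.
Hypothesis HJ : forall a W2 (F F' : 'I_d -> 'I_2), coloring G W2 F -> coloring G W2 F' ->
  Cp (a + mon G W2 F)%MM = Cp (a + mon G W2 F')%MM.
Hypothesis HM : forall a (s t : stab G), val s :&: val t != set0 ->
  ~~ Cp (a + U_(enum_rank s) + U_(enum_rank t))%MM.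

Definition phi (p : {mpoly K[n]}) : K :=
  \sum_(b : 'X_{1..n < Bd}) (Cp b)%:R * p@_b.

Lemma phiD p q : phi (p + q) = phi p + phi q.
Proof. by rewrite /phi -big_split; apply: eq_bigr => b _; rewrite mcoeffD mulrDr. Qed.

Lemma phiB p q : phi (p - q) = phi p - phi q.
Proof. by rewrite /phi -sumrB; apply: eq_bigr => b _; rewrite mcoeffB mulrBr. Qed.

Lemma phiZ c p : phi (c *: p) = c * phi p.
Proof. by rewrite /phi big_distrr; apply: eq_bigr => b _; rewrite mcoeffZ mulrCA. Qed.

Lemma phi_sum (I : Type) (r : seq I) (Fp : I -> {mpoly K[n]}) :
  phi (\sum_(x <- r) Fp x) = \sum_(x <- r) phi (Fp x).
Proof.
elim: r => [|x r IH]; last by rewrite !big_cons phiD IH.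
by rewrite !big_nil /phi big1 // => b _; rewrite mcoeff0 mulr0.
Qed.

Lemma phiX m : phi 'X_[m] = (Cp m)%:R.
Proof.
rewrite /phi; under eq_bigr do rewrite mcoeffX.
case: (boolP (Cp m)) => cm.
  rewrite (bigD1 (BMultinom (HB cm))) //= eqxx cm mulr1 big1 ?addr0 // => b nb.
  suff -> : (m == b) = false by rewrite mulr0.
  apply/negbTE; apply: contra nb => /eqP e; apply/eqP/val_inj => /=; by rewrite e.
rewrite big1 // => b _; case: (eqVneq m (val b)) => [e|ne].
  by rewrite -e (negbTE cm) mul0r.
by rewrite mulr0.
Qed.

Lemma phi_gen a q : J_gen q \/ M_gen q -> phi ('X_[a] * q) = 0.
Proof.
case.
  case=> W2 [F [F' [hF [hF' ->]]]].
  rewrite (xf_mon K hF) (xf_mon K hF') mulrBr -!mpolyXD phiB !phiX.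
  by rewrite (HJ a hF hF') subrr.
case=> s [t [ne ->]]; rewrite /xS mulrA -!mpolyXD phiX.
by rewrite (negbTE (HM a ne)).
Qed.

Lemma phi_mul p q : J_gen q \/ M_gen q -> phi (p * q) = 0.
Proof.
move=> hq; rewrite (mpolyE p) big_distrl phi_sum big1 // => x _.
change (phi ((p@_x *: 'X_[x]) * q) = 0).
by rewrite -scalerAl phiZ phi_gen // mulr0.
Qed.

Lemma phi_KG p : in_KG p -> phi p = 0.
Proof.
case=> s [hs ->]; rewrite phi_sum big1_seq // => q /andP[_ qs].
exact: phi_mul (hs q qs).
Qed.

Variable (le : rel 'X_{1..nv G}).
Hypothesis hle : monomial_order le.

Lemma not_initial m0 : Cp m0 -> (forall y, Cp y -> le m0 y) ->
  ~ in_initial le (@in_KG K d G) 'X_[m0].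
Proof.
move=> cm0 mn [s [hs E]].
have [[refl anti trans tot] [mono _]] := hle.
have : ('X_[m0] : {mpoly K[n]})@_m0 = 1 by rewrite mcoeffX eqxx.
rewrite E raddf_sum => H1.
have [q qs nz] : exists2 q, q \in s & (q.1 * q.2)@_m0 != 0.
  apply/hasP; apply/negPn/negP => /hasPn H0; move: H1; rewrite big1_seq.
    by move/eqP; rewrite eq_sym oner_eq0.
  by move=> q /andP[_ /H0]; rewrite negbK => /eqP.
have [f [l [hf [nzf [[lf lmax] q2]]]]] := hs q qs.
rewrite q2 -mcoeff_msupp (perm_mem (msuppMX _ _)) in nz.
case/mapP: nz => a aq m0E.
have hp' : in_KG (f * 'X_[a]) by rewrite mulrC; apply: idealM.
have := phi_KG hp'; rewrite /phi (bigD1 (BMultinom (HB cm0))) //= cm0 mul1r.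
rewrite big1 ?addr0.
  by rewrite m0E [(l + a)%MM]addmC mcoeffMX => /eqP; rewrite mcoeff_eq0 lf.
move=> b nb; case: (boolP (Cp b)) => cb; last by rewrite mul0r.
rewrite mul1r; apply/eqP/negPn/negP; rewrite -mcoeff_msupp (perm_mem (msuppMX _ _)).
case/mapP => y yf be.
have lb : le b m0.
  by rewrite be m0E [(a + y)%MM]addmC; apply: mono; apply: lmax.
have e : val b = m0 by apply: anti; rewrite lb mn.
by move: nb; rewrite -val_eqE /= e eqxx.
Qed.

End Phi.

Lemma mdeg_seq n (m : 'X_{1..n}) :
  exists s : seq 'I_n, size s = mdeg m /\ m = (\big[+%MM/0%MM]_(x <- s) U_(x))%MM.
Proof.
move Hk: (mdeg m) => N; elim: N m Hk => [|N IH] m Hk.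
  by exists [::]; split => //; rewrite big_nil; apply/eqP; rewrite -mdeg_eq0 Hk.
case: (pickP (fun i => (0 < m i)%N)) => [i hi|H0]; last first.
  by move: Hk; rewrite mdegE big1 // => j _; move: (H0 j) => /= /negbT; rewrite -leqNgt leqn0 => /eqP.
have le1 : (U_(i) <= m)%MM.
  by apply/mnm_lepP => j; rewrite mnm1E; case: eqP => [<-|].
have E := submK le1.
have : mdeg (m - U_(i))%MM = N.
  by move: Hk; rewrite -{1}E mdegD mdeg1 addn1 => -[].
case/IH => s [hs es]; exists (i :: s); split; first by rewrite /= hs.
by rewrite big_cons addmC -es E.
Qed.

Definition pb (P : Prop) : bool := if excluded_middle_informative P then true else false.
Lemma pbP P : reflect P (pb P).
Proof. by rewrite /pb; case: excluded_middle_informative => h; constructor. Qed.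

Lemma seq_min n (le : rel 'X_{1..n}) : reflexive le -> transitive le -> total le ->
  forall s : seq 'X_{1..n}, s != [::] -> exists2 x, x \in s & forall y, y \in s -> le x y.
Proof.
move=> refl trans tot; elim => [//|x s IH] _.
case: (eqVneq s [::]) => [->|ne].
  by exists x; rewrite ?mem_seq1 // => y; rewrite mem_seq1 => /eqP ->.
have [x' xs' mn] := IH ne.
case/orP: (tot x x') => h.
  exists x; first by rewrite mem_head.
  by move=> y; rewrite inE => /orP[/eqP ->//|/mn]; apply: trans.
exists x'; first by rewrite inE xs' orbT.
by move=> y; rewrite inE => /orP[/eqP ->//|/mn].
Qed.

Unset Implicit Arguments.

Theorem theorem6p6 (K : fieldType) (d : nat) (G : rel 'I_d) (k : nat)
  (le : rel 'X_{1..nv G}) :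
  simple_graph G -> (1 <= k)%N -> monomial_order le ->
  (forall m, standard_deg K le k m ->
     exists S : 'I_k -> stab G,
       (forall l1 l2, l1 != l2 -> [disjoint val (S l1) & val (S l2)]) /\
       'X_[m] = \prod_(l < k) xS K (S l))
  /\
  (forall (W : {set 'I_d}) (g : 'I_d -> 'I_k), coloring G W g ->
     exists m, (standard_deg K le k m /\
                exists f, coloring G W f /\ 'X_[m] = xf K G W f /\ kempe_eq G W f g)
       /\ forall m', standard_deg K le k m' ->
            (exists f, coloring G W f /\ 'X_[m'] = xf K G W f /\ kempe_eq G W f g) ->
            m' = m).
Proof.
move=> [symG _] _ hle.
have [[refl anti trans tot] [mono _]] := hle.
split.
  move=> m [dm sm].
  have [s [hs es]] := mdeg_seq m.
  pose i0 := enum_rank (s0 G).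
  pose h (l : 'I_k) := nth i0 s l.
  have hm : m = (\big[+%MM/0%MM]_(l < k) U_(h l))%MM.
    by rewrite es (big_nth i0) hs dm big_mkord.
  exists (fun l => enum_val (h l)); split; last first.
    rewrite {1}hm (big_morph _ (@mpolyXD _ _) (@mpolyX0 _ _)).
    by apply: eq_bigr => l _; rewrite /xS enum_valK.
  move=> l1 l2 nl; case: (boolP [disjoint _ & _]) => // nd; exfalso.
  have ne : val (enum_val (h l1)) :&: val (enum_val (h l2)) != set0 by rewrite setI_eq0.
  move: hm; rewrite (bigD1 l1) //= (bigD1 l2) /=; last by rewrite eq_sym.
  set a := (\big[+%MM/0%MM]_(i | _) _)%MM => hm.
  apply: sm; apply: (@lead_initial K d G le ('X_[m] : {mpoly K[nv G]})).
  - rewrite hm addmA addmC mpolyXD; apply: idealM; apply: ideal_gen; right.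
    exists (enum_val (h l1)), (enum_val (h l2)); split => //.
    by rewrite /xS !enum_valK -mpolyXD.
  - by rewrite -msupp_eq0 msuppX.
  - split; first by rewrite msuppX mem_seq1.
    by move=> m'; rewrite msuppX mem_seq1 => /eqP ->.
move=> W g hg.
pose Comp m := exists f, [/\ coloring G W f, mon G W f = m & kempe_eq G W f g].
pose Cp m := pb (Comp m).
have HB m : Cp m -> (mdeg m < k.+1)%N.
  by move/pbP => [f [_ <- _]]; rewrite mon_deg.
have HJ1 a W2 (F F' : 'I_d -> 'I_2) : coloring G W2 F -> coloring G W2 F' ->
    Cp (a + mon G W2 F)%MM -> Cp (a + mon G W2 F')%MM.
  move=> hF hF' /pbP [f [hf mf kf]]; apply/pbP.
  have [f' [hf' mf' kf']] := jmove symG hf hF hF' mf.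
  exists f'; split => //; move: kf kf'; rewrite /kempe_eq => kf kf'.
  eapply rst_trans; [apply: rst_sym; exact: kf' | exact: kf].
have HJ a W2 (F F' : 'I_d -> 'I_2) : coloring G W2 F -> coloring G W2 F' ->
    Cp (a + mon G W2 F)%MM = Cp (a + mon G W2 F')%MM.
  by move=> hF hF'; apply/idP/idP; apply: HJ1.
have HM a (s t : stab G) : val s :&: val t != set0 ->
    ~~ Cp (a + U_(enum_rank s) + U_(enum_rank t))%MM.
  move=> ne; apply/negP => /pbP [f [hf mf _]].
  rewrite -!cidx_val in mf.
  have [i [j [nij ci cj _]]] := extract hf (valP s) (valP t) mf.
  case/set0Pn: ne => v; rewrite inE -ci -cj !inE => /andP[/andP[_ /eqP fi] /andP[_ /eqP fj]].
  by move: nij; rewrite -fi -fj eqxx.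
pose L := map (fun b : bmultinom (nv G) k.+1 => bmnm b)
  (filter (fun b : bmultinom (nv G) k.+1 => Cp (bmnm b)) (enum {: bmultinom (nv G) k.+1})).
have memL y : Cp y -> y \in L.
  move=> cy; apply/mapP; exists (BMultinom (HB y cy)) => //.
  by rewrite mem_filter /= cy mem_enum.
have Lne : L != [::].
  have : Cp (mon G W g) by apply/pbP; exists g; split => //; apply: rst_refl.
  by move/memL; case: (L) => //.
have [m0 m0L mn] := seq_min refl trans tot Lne.
have cm0 : Cp m0 by move: m0L => /mapP [b]; rewrite mem_filter => /andP[cb _] ->.
have [f0 [hf0 mf0 kf0]] : Comp m0 by apply/pbP.
have std0 : standard_deg K le k m0.
  split; first by rewrite -mf0 mon_deg.
  apply: (not_initial HB HJ HM hle cm0) => y cy; exact: mn (memL y cy).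
exists m0; split.
  by split => //; exists f0; split => //; rewrite (xf_mon K hf0) mf0.
move=> m' std' [f' [hf' [xm' kf']]].
apply: esym; apply: (standard_unique hle std0 std').
rewrite xm' -mf0 -(xf_mon K hf0).
apply: (kempe_KG K); move: kf0 kf'; rewrite /kempe_eq => kf0 kf'.
eapply rst_trans; [exact: kf0 | apply: rst_sym; exact: kf'].
Qed.
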